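(* Let $d\ge 3$ and let $\mathfrak M$ be a model of $\mathsf{SpecRel}_d$. Let $m,k\in\mathrm{IOb}$ and $e_1,e_2\in Ev_k$ with $k\in e_1\cap e_2$ and $\mathsf{dist}_m(e_1,e_2)\neq 0$. Then $\mathsf{time}_m(e_1,e_2)>\mathsf{time}_k(e_1,e_2)$.
   Context: Fix a natural number $d\ge 2$. Models are first-order structures $\mathfrak M=\langle U;\mathrm B,\mathrm{Ob},\mathrm{IOb},\mathrm{Ph},\mathrm Q,+,\cdot,\le,\mathrm W\rangle$, where $\mathrm B,\mathrm{Ob},\mathrm{IOb},\mathrm{Ph},\mathrm Q$ are unary relations (subsets of $U$: bodies, observers, inertial observers, photons, quantities), $+,\cdot$ are binary function symbols, $\le$ a binary relation symbol, and $\mathrm W$ a $(2+d)$-ary relation; $\mathrm W(m,b,\vec p)$ is read ''observer $m$ coordinatizes body $b$ at coordinate point $\vec p\in\mathrm Q^d$''. For $\vec p=\langle p_1,\dots,p_d\rangle\in\mathrm Q^d$ write $p_t:=p_1$ (time component), $\vec p_s:=\langle p_2,\dots,p_d\rangle$ (space component), $|\vec p|:=\sqrt{p_1^2+\dots+p_n^2}$ for $\vec p\in \mathrm Q^n$ (Euclidean length); $\mathrm Q^d$ carries its vector-space operations and $\vec o$ is the origin. Define $ev_m(\vec p):=\{b\in\mathrm B:\mathrm W(m,b,\vec p)\}$, $Cd_m:=\{\vec p\in\mathrm Q^d: ev_m(\vec p)\neq\emptyset\}$, $Ev_m:=\{ev_m(\vec p):\vec p\in Cd_m\}$, $Ev:=\bigcup_{m\in\mathrm{Ob}}Ev_m$.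 $Crd_m(e)$ denotes the unique $\vec p\in Cd_m$ with $ev_m(\vec p)=e$; any statement involving $Crd_m(e)$ (or the notions below built from it) tacitly asserts that such a unique $\vec p$ exists. $\mathsf{time}_m(e_1,e_2):=|Crd_m(e_1)_t-Crd_m(e_2)_t|$, $\mathsf{dist}_m(e_1,e_2):=|Crd_m(e_1)_s-Crd_m(e_2)_s|$, and $e_1\sim_m e_2$ (simultaneous for $m$) iff $Crd_m(e_1)_t=Crd_m(e_2)_t$. $\mathsf{SpecRel}_d$ consists of the axioms: AxFrame: $\mathrm{Ob}\cup\mathrm{Ph}\subseteq\mathrm B$, $\mathrm{IOb}\subseteq\mathrm{Ob}$, $U=\mathrm B\cup\mathrm Q$, $\mathrm B\cap\mathrm Q=\emptyset$, $\mathrm W\subseteq\mathrm{Ob}\times\mathrm B\times\mathrm Q^d$, $+,\cdot$ are binary operations on $\mathrm Q$ and $\le$ is a binary relation on $\mathrm Q$. AxEOF: $\langle\mathrm Q;+,\cdot,\le\rangle$ is a Euclidean ordered field (a linearly ordered field in which every positive element has a square root). AxSelf$^-$: $\forall m\in\mathrm{Ob}\ \forall\vec p\in Cd_m\ (m\in ev_m(\vec p)\iff \vec p_s=\vec o)$. AxPh$_0$: $\forall m\in\mathrm{IOb}\ \forall\vec p,\vec q\in\mathrm Q^d\ (|\vec p_s-\vec q_s|=|p_t-q_t|\iff \mathrm{Ph}\cap ev_m(\vec p)\cap ev_m(\vec q)\neq\emptyset)$. AxEv: $\forall m,k\in\mathrm{IOb}\ Ev_m=Ev_k$. AxSimDist: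 $\forall m,k\in\mathrm{IOb}\ \forall e_1,e_2\in Ev_m\ (e_1\sim_m e_2\wedge e_1\sim_k e_2\Rightarrow \mathsf{dist}_m(e_1,e_2)=\mathsf{dist}_k(e_1,e_2))$. *)

(* Defs.v *)
(* Models of SpecRel_d, with d = n.+1 (n = number of spatial dims). *)
From mathcomp Require Import all_boot all_order all_algebra.
From Stdlib Require Import ClassicalEpsilon.
Set Implicit Arguments. Unset Strict Implicit. Unset Printing Implicit Defensive.
Import Order.TTheory GRing.Theory Num.Theory.
Local Open Scope ring_scope.

Section SpecRel.
Variable R : realFieldType.
Variable n : nat.

Definition point := 'rV[R]_(n.+1).

Definition tcomp (p : point) : R := p ord0 ord0.
Definition scomp (p : point) : 'rV[R]_n := \row_(i < n) p ord0 (lift ord0 i).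

(* square root (meaningful in a Euclidean ordered field: the nonnegative root) *)
Definition esqrt (x : R) : R :=
  epsilon (inhabits 0) (fun y : R => 0 <= y /\ y * y = x).

Definition elen k (v : 'rV[R]_k) : R := esqrt (\sum_(i < k) (v ord0 i) ^+ 2).

Definition Euclidean : Prop := forall x : R, 0 < x -> exists y : R, y * y = x.

Variable B : Type.
Variables Ob IOb Ph : B -> Prop.
Variable W : B -> B -> point -> Prop.

Definition ev (m : B) (p : point) : B -> Prop := fun b => W m b p.
Definition Cd (m : B) (p : point) : Prop := exists b, W m b p.
Definition inEv (m : B) (e : B -> Prop) : Prop := exists p, Cd m p /\ ev m p = e.
Definition inEvAll (e : B -> Prop) : Prop := exists m, Ob m /\ inEv m e.

(* IsCrd m e p : p is the unique point of Cd_m with ev_m(p) = e, i.e. Crd_m(e) = p *)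
Definition IsCrd (m : B) (e : B -> Prop) (p : point) : Prop :=
  Cd m p /\ ev m p = e /\ forall q, Cd m q -> ev m q = e -> q = p.

Definition tdiff (p q : point) : R := `|tcomp p - tcomp q|.
Definition sdist (p q : point) : R := elen (scomp p - scomp q).

Definition AxFrame : Prop :=
  (forall m, IOb m -> Ob m) /\ (forall m b p, W m b p -> Ob m).

Definition AxEOF : Prop := Euclidean.

Definition AxSelf : Prop :=
  forall m, Ob m -> forall p, Cd m p -> (W m m p <-> scomp p = 0).

Definition AxPh0 : Prop :=
  forall m, IOb m -> forall p q : point,
    (elen (scomp p - scomp q) = `|tcomp p - tcomp q| <->
     exists b, Ph b /\ W m b p /\ W m b q).

Definition AxEv : Prop :=
  forall m k, IOb m -> IOb k -> forall e, inEv m e <-> inEv k e.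

Definition AxSimDist : Prop :=
  forall m k, IOb m -> IOb k -> forall e1 e2, inEv m e1 -> inEv m e2 ->
  forall p1 p2 q1 q2,
    IsCrd m e1 p1 -> IsCrd m e2 p2 -> IsCrd k e1 q1 -> IsCrd k e2 q2 ->
    tcomp p1 = tcomp p2 -> tcomp q1 = tcomp q2 ->
    sdist p1 p2 = sdist q1 q2.

Definition SpecRel : Prop :=
  AxFrame /\ AxEOF /\ AxSelf /\ AxPh0 /\ AxEv /\ AxSimDist.

End SpecRel.

(* Main.v *)
Require Import Defs.
From mathcomp Require Import all_boot all_order all_algebra.
From mathcomp Require Import ring lra.
From Stdlib Require Import ClassicalEpsilon Classical.
Set Implicit Arguments. Unset Strict Implicit. Unset Printing Implicit Defensive.
Import Order.TTheory GRing.Theory Num.Theory.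
Local Open Scope ring_scope.

Ltac vec := apply/rowP => j; rewrite !mxE; ring.
Ltac vecf := apply/rowP => j; rewrite !mxE; field.


Definition dot (R : realFieldType) (k : nat) (a b : 'rV[R]_k) : R :=
  \sum_(i < k) a ord0 i * b ord0 i.

Definition Bf (R : realFieldType) (n : nat) (p q : point R n) : R :=
  tcomp p * tcomp q - dot (scomp p) (scomp q).

Definition Lt (R : realFieldType) (n : nat) (p q : point R n) : Prop :=
  Bf (p - q) (p - q) = 0.

Lemma dotC (R : realFieldType) k (a b : 'rV[R]_k) : dot a b = dot b a.
Proof. by apply: eq_bigr => i _; rewrite mulrC. Qed.
Lemma dotDl (R : realFieldType) k (a b c : 'rV[R]_k) : dot (a + b) c = dot a c + dot b c.
Proof. by rewrite /dot -big_split; apply: eq_bigr => i _; rewrite !mxE mulrDl. Qed.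
Lemma dotNl (R : realFieldType) k (a c : 'rV[R]_k) : dot (- a) c = - dot a c.
Proof. by rewrite /dot -sumrN; apply: eq_bigr => i _; rewrite !mxE mulNr. Qed.
Lemma dotZl (R : realFieldType) k (x : R) (a c : 'rV[R]_k) : dot (x *: a) c = x * dot a c.
Proof. by rewrite /dot mulr_sumr; apply: eq_bigr => i _; rewrite !mxE mulrA. Qed.
Lemma dot_ge0 (R : realFieldType) k (a : 'rV[R]_k) : 0 <= dot a a.
Proof. by apply: sumr_ge0 => i _; rewrite -expr2 sqr_ge0. Qed.
Lemma dot_eq0 (R : realFieldType) k (a : 'rV[R]_k) : dot a a = 0 -> a = 0.
Proof.
move=> h; apply/rowP => i; rewrite mxE.
have /psumr_eq0P H : forall j : 'I_k, true -> 0 <= a ord0 j * a ord0 j.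
  by move=> j _; rewrite -expr2 sqr_ge0.
have := H h i isT; rewrite -expr2 => /eqP; rewrite sqrf_eq0 => /eqP.
by [].
Qed.

Lemma tcompD (R : realFieldType) n (p q : point R n) : tcomp (p + q) = tcomp p + tcomp q.
Proof. by rewrite /tcomp mxE. Qed.
Lemma tcompN (R : realFieldType) n (p : point R n) : tcomp (- p) = - tcomp p.
Proof. by rewrite /tcomp mxE. Qed.
Lemma tcompZ (R : realFieldType) n (x : R) (p : point R n) : tcomp (x *: p) = x * tcomp p.
Proof. by rewrite /tcomp mxE. Qed.
Lemma tcomp0 (R : realFieldType) n : tcomp (0 : point R n) = 0.
Proof. by rewrite /tcomp mxE. Qed.
Lemma scompD (R : realFieldType) n (p q : point R n) : scomp (p + q) = scomp p + scomp q.
Proof. by apply/rowP => i; rewrite !mxE. Qed.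
Lemma scompN (R : realFieldType) n (p : point R n) : scomp (- p) = - scomp p.
Proof. by apply/rowP => i; rewrite !mxE. Qed.
Lemma scompZ (R : realFieldType) n (x : R) (p : point R n) : scomp (x *: p) = x *: scomp p.
Proof. by apply/rowP => i; rewrite !mxE. Qed.
Lemma scomp0 (R : realFieldType) n : scomp (0 : point R n) = 0.
Proof. by apply/rowP => i; rewrite !mxE. Qed.

Lemma pt_eq0 (R : realFieldType) n (p : point R n) : tcomp p = 0 -> scomp p = 0 -> p = 0.
Proof.
move=> ht hs; apply/rowP => j; rewrite mxE.
case: (unliftP ord0 j) => [i ->|->].
  by have := congr1 (fun r : 'rV[R]_n => r ord0 i) hs; rewrite !mxE.
by [].
Qed.

Lemma BfC (R : realFieldType) n (p q : point R n) : Bf p q = Bf q p.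
Proof. by rewrite /Bf mulrC dotC. Qed.
Lemma BfDl (R : realFieldType) n (p q r : point R n) : Bf (p + q) r = Bf p r + Bf q r.
Proof. rewrite /Bf tcompD scompD dotDl; ring. Qed.
Lemma BfNl (R : realFieldType) n (p r : point R n) : Bf (- p) r = - Bf p r.
Proof. rewrite /Bf tcompN scompN dotNl; ring. Qed.
Lemma BfZl (R : realFieldType) n x (p r : point R n) : Bf (x *: p) r = x * Bf p r.
Proof. rewrite /Bf tcompZ scompZ dotZl; ring. Qed.
Lemma BfDr (R : realFieldType) n (p q r : point R n) : Bf r (p + q) = Bf r p + Bf r q.
Proof. by rewrite !(BfC r) BfDl. Qed.
Lemma BfNr (R : realFieldType) n (p r : point R n) : Bf r (- p) = - Bf r p.
Proof. by rewrite !(BfC r) BfNl. Qed.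
Lemma BfZr (R : realFieldType) n x (p r : point R n) : Bf r (x *: p) = x * Bf r p.
Proof. by rewrite !(BfC r) BfZl. Qed.
Lemma Bf0l (R : realFieldType) n (r : point R n) : Bf 0 r = 0.
Proof. by rewrite -(scale0r 0) BfZl mul0r. Qed.

Definition BfE := (BfDl, BfNl, BfZl, BfDr, BfNr, BfZr).

Lemma Bf_self (R : realFieldType) n (r : point R n) :
  Bf r r = tcomp r ^+ 2 - dot (scomp r) (scomp r).
Proof. by rewrite /Bf expr2. Qed.

Lemma null_orth (R : realFieldType) n (u v : point R n) :
  Bf u u = 0 -> Bf v v = 0 -> Bf u v = 0 -> u != 0 ->
  v = (tcomp v / tcomp u) *: u.
Proof.
move=> hu hv huv nu.
have tu : tcomp u != 0.
  apply/negP => /eqP t0; move/negP: nu; apply; apply/eqP; apply: pt_eq0 => //.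
  apply: dot_eq0; move: hu; rewrite Bf_self t0; have := dot_ge0 (scomp u); lra.
set r := tcomp u *: v - tcomp v *: u.
have tr : tcomp r = 0 by rewrite /r tcompD tcompN !tcompZ; ring.
have br : Bf r r = 0 by rewrite /r !BfE hu hv (BfC v) huv; ring.
have sr : scomp r = 0 by apply: dot_eq0; move: br; rewrite Bf_self tr; lra.
have r0 := pt_eq0 tr sr.
move: r0; rewrite /r => /eqP; rewrite subr_eq0 => /eqP h.
apply: (scalerI tu); rewrite h scalerA; congr (_ *: _); field; exact: tu.
Qed.



Lemma line0 (R : realFieldType) n (u z : point R n) :
  Bf u u = 0 -> u != 0 -> Bf z z = 0 -> Bf (z - u) (z - u) = 0 ->
  z = (tcomp z / tcomp u) *: u.
Proof.
move=> h1 nu h3 h4.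
rewrite !BfE h1 h3 (BfC z u) in h4.
have hzu : Bf u z = 0 by move: h4; lra.
exact: null_orth h1 h3 hzu nu.
Qed.

Lemma lineP (R : realFieldType) n (A Bp Z : point R n) :
  Lt Bp A -> Bp != A -> Lt Z A -> Lt Z Bp -> exists c, Z = A + c *: (Bp - A).
Proof.
rewrite /Lt => h1 h2 h3 h4.
have nu : Bp - A != 0 by rewrite subr_eq0.
have e : Z - Bp = (Z - A) - (Bp - A) by vec.
rewrite e in h4.
have := line0 h1 nu h3 h4 => ez.
by exists (tcomp (Z - A) / tcomp (Bp - A)); rewrite -ez; vec.
Qed.

Lemma Lt_sym (R : realFieldType) n (p q : point R n) : Lt p q -> Lt q p.
Proof.
rewrite /Lt => h. have -> : q - p = - (p - q) by vec.
by rewrite BfNl BfNr opprK.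
Qed.



Lemma vec_solve (R : realFieldType) n (q1 q2 x y z : point R n) l m :
  y = q2 - (x - q1) ->
  z = q1 + l *: (x - q1) -> z = q2 + m *: (y - q2) ->
  q1 - q2 = (- (l + m)) *: (x - q1).
Proof.
move=> -> -> e; apply/rowP => j; have := congr1 (fun r : point R n => r ord0 j) e.
rewrite !mxE => h; lra.
Qed.

Lemma null_scale (R : realFieldType) n (a : point R n) c :
  Bf a a = 0 -> Bf (c *: a) (c *: a) = 0.
Proof. by move=> h; rewrite BfZl BfZr h !mulr0. Qed.

Lemma LtE (R : realFieldType) n (p q : point R n) : Lt p q = (Bf (p - q) (p - q) = 0).
Proof. by []. Qed.

Lemma PL (R : realFieldType) n (F : point R n -> point R n -> Prop)
 (Ftot : forall z, exists p, F z p)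
 (Fsur : forall p, exists z, F z p)
 (Finj : forall z z' p, F z p -> F z' p -> z = z')
 (Flt : forall z z' p p', F z p -> F z' p' -> (Lt z z' <-> Lt p p'))
 (q1 q2 x p1 p2 X Y : point R n) :
 F q1 p1 -> F q2 p2 -> F x X -> F (q2 - (x - q1)) Y ->
 Lt x q1 -> x != q1 -> Lt x q2 -> ~ Lt q1 q2 ->
 exists c, Y - p2 = c *: (X - p1).
Proof.
move=> F1 F2 Fx FY hxq1 nxq1 hxq2 nq.
set y := q2 - (x - q1) in FY.
have hyq2 : Lt y q2.
  rewrite LtE; have -> : y - q2 = - (x - q1) by rewrite /y; vec.
  by rewrite BfNl BfNr opprK.
have nyq2 : y != q2.
  apply/negP => /eqP e; move/negP: nxq1; apply; apply/eqP.
  apply/rowP => j; have := congr1 (fun r : point R n => r ord0 j) e; rewrite /y !mxE => ?; lra.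
have nX : X != p1.
  by apply/negP => /eqP e; move/negP: nxq1; apply; apply/eqP; apply: (Finj _ _ _ Fx); rewrite e.
have nY : Y != p2.
  by apply/negP => /eqP e; move/negP: nyq2; apply; apply/eqP; apply: (Finj _ _ _ FY); rewrite e.
have hu : Lt X p1 by apply/(Flt _ _ _ _ Fx F1).
have hv : Lt Y p2 by apply/(Flt _ _ _ _ FY F2).
have [u eX] : exists u, X = p1 + u by exists (X - p1); vec.
have [w e2] : exists w, p2 = p1 + w by exists (p2 - p1); vec.
have [v eY] : exists v, Y = p2 + v by exists (Y - p2); vec.
rewrite eY e2 in hv nY F2 FY *; rewrite eX in hu nX Fx *.
have -> : p1 + w + v - (p1 + w) = v by vec.
have -> : p1 + u - p1 = u by vec.
have nu : u != 0 by apply: contra nX => /eqP ->; rewrite addr0.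
have huu : Bf u u = 0 by move: hu; rewrite LtE; have -> : p1 + u - p1 = u by vec.
have hvv : Bf v v = 0 by move: hv; rewrite LtE; have -> : p1 + w + v - (p1 + w) = v by vec.
have [buv|buv] := eqVneq (Bf u v) 0.
  by exists (tcomp v / tcomp u); apply: null_orth.
have [s0 hs0] : exists s0, s0 * Bf u v = Bf w v by exists (Bf w v / Bf u v); rewrite mulfVK.
pose Z := p1 + s0 *: u.
have [z Fz] := Fsur Z.
have hZ1 : Lt Z p1.
  rewrite LtE; have -> : Z - p1 = s0 *: u by rewrite /Z; vec.
  by rewrite !BfE huu !mulr0.
have hZX : Lt Z (p1 + u).
  rewrite LtE; have -> : Z - (p1 + u) = (s0 - 1) *: u by rewrite /Z; vec.
  by rewrite !BfE huu !mulr0.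
have hzq1 : Lt z q1 by apply/(Flt _ _ _ _ Fz F1).
have hzx : Lt z x by apply/(Flt _ _ _ _ Fz Fx).
have [l ez1] := lineP hxq1 nxq1 hzq1 hzx.
pose K := q2 - (1 - l) *: (x - q1).
have [Kp FK] := Ftot K.
have hzK : Lt z K.
  rewrite LtE; have -> : z - K = x - q2 by rewrite ez1 /K; vec.
  exact: hxq2.
have hKq2 : Lt K q2.
  rewrite LtE; have -> : K - q2 = (l - 1) *: (x - q1) by rewrite /K; vec.
  exact: null_scale.
have hKy : Lt K y.
  rewrite LtE; have -> : K - y = l *: (x - q1) by rewrite /K /y; vec.
  exact: null_scale.
have hKp2 : Lt Kp (p1 + w) by apply/(Flt _ _ _ _ FK F2).
have hKpY : Lt Kp (p1 + w + v) by apply/(Flt _ _ _ _ FK FY).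
have [s' eK] := lineP hv nY hKp2 hKpY.
have hZK : Lt Z Kp by apply/(Flt _ _ _ _ Fz FK).
have key : Bf w w - 2 * s0 * Bf u w = 0.
  move: hZK; rewrite LtE.
  have -> : Z - Kp = s0 *: u - w - s' *: v by rewrite eK /Z; vec.
  rewrite !BfE huu hvv (BfC w u) (BfC v u) (BfC v w) => h.
  have e3 : s' * s0 * Bf u v = s' * Bf w v by rewrite -hs0; ring.
  move: h; rewrite -!mulrA; lra.
have hZp2 : Lt Z (p1 + w).
  rewrite LtE; have -> : Z - (p1 + w) = s0 *: u - w by rewrite /Z; vec.
  rewrite !BfE huu (BfC w u); move: key; lra.
have hZY : Lt Z (p1 + w + v).
  rewrite LtE; have -> : Z - (p1 + w + v) = s0 *: u - w - v by rewrite /Z; vec.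
  rewrite !BfE huu hvv (BfC w u) (BfC v u) (BfC v w).
  move: key hs0; lra.
have hzq2 : Lt z q2 by apply/(Flt _ _ _ _ Fz F2).
have hzy : Lt z y by apply/(Flt _ _ _ _ Fz FY).
have [mu ez2] := lineP hyq2 nyq2 hzq2 hzy.
have eq := vec_solve (erefl y) ez1 ez2.
exfalso; apply: nq; rewrite LtE eq; exact: null_scale.
Qed.

Lemma para (R : realFieldType) n (p1 p2 X Y : point R n) a b :
  X != p1 -> Bf (X - p1) (X - p1) = 0 -> Bf (p2 - p1) (p2 - p1) != 0 ->
  Y - p2 = a *: (X - p1) -> X - p2 = b *: (Y - p1) -> X + Y = p1 + p2.
Proof.
move=> nX hu hw e1 e2.
have E : (1 - a * b) *: (X - p1) = (1 + b) *: (p2 - p1).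
  apply/rowP => j; have := congr1 (fun r : point R n => r ord0 j) e1;
  have := congr1 (fun r : point R n => r ord0 j) e2; rewrite !mxE => h2 h1.
  have hy : Y ord0 j = p2 ord0 j + a * (X ord0 j - p1 ord0 j) by lra.
  rewrite hy in h2; lra.
have nu : X - p1 != 0 by rewrite subr_eq0.
have hab : 1 - a * b = 0.
  apply/eqP/negPn/negP => nab.
  have [b1|b1] := eqVneq (1 + b) 0.
    move: E; rewrite b1 scale0r => /eqP; rewrite scaler_eq0 (negbTE nab) /=.
    by rewrite (negbTE nu).
  have ew : p2 - p1 = ((1 + b)^-1 * (1 - a * b)) *: (X - p1).
    by rewrite -scalerA E scalerA mulVf // scale1r.
  by move/negP: hw; apply; rewrite ew null_scale.
have hb : b = -1.
  move: E; rewrite hab scale0r => /esym/eqP; rewrite scaler_eq0.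
  case/orP => [h|]; first by apply/eqP; rewrite -subr_eq0 opprK addrC.
  by move=> /eqP h; move: hw; rewrite h Bf0l eqxx.
have ha : a = -1 by move: hab; rewrite hb; lra.
move: e1; rewrite ha scaleN1r => e1; apply/rowP => j.
have := congr1 (fun r : point R n => r ord0 j) e1; rewrite !mxE => h; lra.
Qed.



Lemma sqrt_ex (R : realFieldType) : Euclidean R -> forall x : R, 0 <= x ->
  exists y, 0 <= y /\ y * y = x.
Proof.
move=> hE x; rewrite le0r => /orP[/eqP ->|hx]; first by exists 0; rewrite mul0r.
have [y hy] := hE x hx; exists `|y|; split => //.
by rewrite -normrM hy ger0_norm // ltW.
Qed.

Lemma esqrt_spec (R : realFieldType) : Euclidean R -> forall x : R, 0 <= x ->
  0 <= esqrt x /\ esqrt x * esqrt x = x.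
Proof.
move=> hE x hx; rewrite /esqrt.
apply: (epsilon_spec (inhabits 0) (fun y : R => 0 <= y /\ y * y = x)).
exact: sqrt_ex.
Qed.

Lemma elen_dot (R : realFieldType) k (v : 'rV[R]_k) : elen v = esqrt (dot v v).
Proof. by rewrite /elen /dot; congr esqrt; apply: eq_bigr => i _; rewrite expr2. Qed.

Lemma sdist_sq (R : realFieldType) n : Euclidean R -> forall p q : point R n,
  0 <= sdist p q /\ sdist p q * sdist p q = dot (scomp (p - q)) (scomp (p - q)).
Proof.
move=> hE p q; rewrite /sdist elen_dot.
have -> : scomp p - scomp q = scomp (p - q) by rewrite scompD scompN.
exact: esqrt_spec (dot_ge0 _).
Qed.

Lemma dot_scomp (R : realFieldType) n (r : point R n) :
  dot (scomp r) (scomp r) = tcomp r ^+ 2 - Bf r r.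
Proof. rewrite Bf_self; ring. Qed.

Lemma Lt_elen (R : realFieldType) n : Euclidean R -> forall p q : point R n,
  (elen (scomp p - scomp q) = `|tcomp p - tcomp q|) <-> Lt p q.
Proof.
move=> hE p q; rewrite elen_dot /Lt Bf_self.
have -> : scomp p - scomp q = scomp (p - q) by rewrite scompD scompN.
have -> : tcomp p - tcomp q = tcomp (p - q) by rewrite tcompD tcompN.
have [h1 h2] := esqrt_spec hE (dot_ge0 (scomp (p - q))).
move: h1 h2; set s := esqrt _; set d := dot _ _; set t := tcomp _.
move=> h1 h2; split.
  move=> e; rewrite -h2 e -normrM -expr2 ger0_norm ?sqr_ge0 //; ring.
move=> e.
have hd : d = t ^+ 2 by move: e; lra.
have hn : `|t| * `|t| = t ^+ 2 by rewrite -normrM -expr2 ger0_norm ?sqr_ge0.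
have := normr_ge0 t; move: h1 h2 hd hn; nra.
Qed.



Definition mkpt (R : realFieldType) n (t : R) (s : 'rV[R]_n) : point R n :=
  \row_(j < n.+1) match unlift ord0 j with None => t | Some i => s ord0 i end.

Lemma tcomp_mk (R : realFieldType) n t (s : 'rV[R]_n) : tcomp (mkpt t s) = t.
Proof. by rewrite /tcomp /mkpt mxE unlift_none. Qed.
Lemma scomp_mk (R : realFieldType) n t (s : 'rV[R]_n) : scomp (mkpt t s) = s.
Proof. by apply/rowP => i; rewrite /mkpt !mxE liftK. Qed.

Definition delta (R : realFieldType) n (i : 'I_n) : 'rV[R]_n := \row_j (j == i)%:R.

Lemma dot_delta (R : realFieldType) n (i : 'I_n) (v : 'rV[R]_n) : dot (delta R i) v = v ord0 i.
Proof.
rewrite /dot (bigD1 i) //= mxE eqxx mul1r big1 ?addr0 // => j /negbTE hj.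
by rewrite mxE hj mul0r.
Qed.

Lemma ortho_ex (R : realFieldType) n : (2 <= n)%N -> forall v : 'rV[R]_n,
  exists w, dot w v = 0 /\ 0 < dot w w.
Proof.
move=> hn v.
have h0 : (0 < n)%N by apply: leq_trans hn.
pose i0 := Ordinal h0; pose i1 := Ordinal hn.
have ne : i0 != i1 by [].
pose w := (- v ord0 i1) *: delta R i0 + v ord0 i0 *: delta R i1.
have dw : forall u, dot w u = - v ord0 i1 * u ord0 i0 + v ord0 i0 * u ord0 i1.
  by move=> u; rewrite /w dotDl !dotZl !dot_delta.
have [z|nz] := eqVneq (v ord0 i0 ^+ 2 + v ord0 i1 ^+ 2) 0.
  exists (delta R i0); rewrite !dot_delta mxE eqxx; split => //.
  have := sqr_ge0 (v ord0 i0); have := sqr_ge0 (v ord0 i1); move: z.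
  by rewrite !expr2 => z a b; nra.
exists w; rewrite dw; split; first by ring.
rewrite dw /w !mxE eqxx (negbTE ne) eq_sym (negbTE ne) /=.
have := sqr_ge0 (v ord0 i0); have := sqr_ge0 (v ord0 i1).
move: nz; rewrite !expr2 => nz a b.
have : 0 < v ord0 i0 * v ord0 i0 + v ord0 i1 * v ord0 i1.
  by rewrite lt0r nz /=; apply: addr_ge0.
nra.
Qed.

Lemma sep (R : realFieldType) n : (1 <= n)%N -> forall p q : point R n, p != q ->
  exists r, Lt p r /\ ~ Lt q r.
Proof.
move=> hn p q npq.
pose i0 := Ordinal hn.
pose U := mkpt 1 (delta R i0); pose U' := mkpt 1 (- delta R i0).
have dd : dot (delta R i0) (delta R i0) = 1 by rewrite dot_delta mxE eqxx.
have hU : Bf U U = 0 by rewrite /Bf /U tcomp_mk scomp_mk dd; ring.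
have hU' : Bf U' U' = 0 by rewrite /Bf /U' tcomp_mk scomp_mk dotNl dotC dotNl dd; ring.
have key : forall c (Y : point R n), Bf Y Y = 0 -> Lt q (p + c *: Y) ->
    Bf (p - q) (p - q) + 2 * c * Bf (p - q) Y = 0.
  move=> c Y hY; rewrite /Lt.
  have -> : q - (p + c *: Y) = - ((p - q) + c *: Y) by vec.
  move: (p - q) => w; rewrite !BfE hY (BfC Y w); move=> h; rewrite -h; ring.
have lp : forall c (Y : point R n), Bf Y Y = 0 -> Lt p (p + c *: Y).
  move=> c Y hY; rewrite /Lt; have -> : p - (p + c *: Y) = (- c) *: Y by vec.
  exact: null_scale.
apply: NNPP => hnot.
have H : forall c (Y : point R n), Bf Y Y = 0 -> Lt q (p + c *: Y).
  move=> c Y hY; apply: NNPP => nl; apply: hnot; exists (p + c *: Y); split => //.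
  exact: lp.
have k1 := key 1 U hU (H 1 U hU).
have k2 := key 2 U hU (H 2 U hU).
have k3 := key 1 U' hU' (H 1 U' hU').
move: npq; rewrite -subr_eq0 => /negP; apply; apply/eqP.
have e1 : Bf (p - q) U = tcomp (p - q) - (scomp (p - q)) ord0 i0.
  by rewrite /Bf /U tcomp_mk scomp_mk dotC dot_delta mulr1.
have e2 : Bf (p - q) U' = tcomp (p - q) + (scomp (p - q)) ord0 i0.
  by rewrite /Bf /U' tcomp_mk scomp_mk dotC dotNl dot_delta mulr1 opprK.
rewrite e1 in k1 k2; rewrite e2 in k3.
have ht : tcomp (p - q) = 0 by lra.
have hb : Bf (p - q) (p - q) = 0 by lra.
apply: pt_eq0 => //; apply: dot_eq0; rewrite dot_scomp ht hb; ring.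
Qed.


Lemma ph_Lt (R : realFieldType) n (B : Type) (IOb Ph : B -> Prop)
  (W : B -> B -> point R n -> Prop) :
  Euclidean R -> AxPh0 IOb Ph W -> forall o, IOb o -> forall p q,
  Lt p q <-> exists b, Ph b /\ W o b p /\ W o b q.
Proof. by move=> hE hP o ho p q; rewrite -(Lt_elen hE); apply: hP. Qed.

Lemma Lt_refl (R : realFieldType) n (p : point R n) : Lt p p.
Proof. by rewrite /Lt subrr Bf0l. Qed.

Lemma Cd_all (R : realFieldType) n (B : Type) (IOb Ph : B -> Prop)
  (W : B -> B -> point R n -> Prop) :
  Euclidean R -> AxPh0 IOb Ph W -> forall o, IOb o -> forall p, Cd W o p.
Proof.
move=> hE hP o ho p; have [b [_ [h _]]] := (ph_Lt hE hP ho p p).1 (Lt_refl p).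
by exists b.
Qed.

Lemma ev_inj (R : realFieldType) n (B : Type) (IOb Ph : B -> Prop)
  (W : B -> B -> point R n -> Prop) : (1 <= n)%N ->
  Euclidean R -> AxPh0 IOb Ph W -> forall o, IOb o -> forall p q,
  ev W o p = ev W o q -> p = q.
Proof.
move=> hn hE hP o ho p q e; apply: NNPP => npq.
have [r [h1 h2]] := sep hn (introN eqP npq).
have [b [hb [bp br]]] := (ph_Lt hE hP ho p r).1 h1.
apply: h2; apply/(ph_Lt hE hP ho); exists b; split => //; split => //.
have : ev W o p b by [].
by rewrite e.
Qed.

Lemma mkCrd (R : realFieldType) n (B : Type) (IOb Ph : B -> Prop)
  (W : B -> B -> point R n -> Prop) : (1 <= n)%N ->
  Euclidean R -> AxPh0 IOb Ph W -> forall o, IOb o -> forall p e,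
  ev W o p = e -> IsCrd W o e p.
Proof.
move=> hn hE hP o ho p e he; split; first by apply: Cd_all hE hP o ho p.
split => // q _ hq; apply: (ev_inj hn hE hP ho); by rewrite hq.
Qed.



Lemma sq_abs_lt (R : realFieldType) (a b : R) : a ^+ 2 < b ^+ 2 -> `|a| < `|b|.
Proof.
move=> h; have ha := real_normK (num_real a); have hb := real_normK (num_real b).
have := normr_ge0 a; have := normr_ge0 b; move: ha hb h; rewrite !expr2; nra.
Qed.

Lemma dot0r (R : realFieldType) k (a : 'rV[R]_k) : dot a 0 = 0.
Proof. by rewrite /dot big1 // => i _; rewrite mxE mulr0. Qed.

Lemma Bf_s0 (R : realFieldType) n (r d : point R n) :
  scomp d = 0 -> Bf r d = tcomp r * tcomp d.
Proof. by move=> h; rewrite /Bf h dot0r subr0. Qed.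

Lemma S_gen (R : realFieldType) n (a d : point R n) :
  scomp d = 0 -> tcomp d != 0 -> Bf a a = 0 -> Bf (a - d) (a - d) = 0 ->
  Bf a d = tcomp d ^+ 2 / 2 /\ tcomp a = tcomp d / 2.
Proof.
move=> sd td h1 h2.
have dd : Bf d d = tcomp d ^+ 2 by rewrite Bf_s0 // expr2.
rewrite !BfE dd (BfC d a) h1 in h2.
have hb : Bf a d = tcomp d ^+ 2 / 2 by move: h2; lra.
split => //.
move: hb; rewrite Bf_s0 // => hb.
apply: (mulIf td); rewrite hb; by field.
Qed.

Lemma S_facts (R : realFieldType) n (q1 q2 x : point R n) :
  scomp q1 = 0 -> scomp q2 = 0 -> Lt x q1 -> Lt x q2 -> tcomp q1 != tcomp q2 ->
  Bf (x - q1) (q2 - q1) = (tcomp q2 - tcomp q1) ^+ 2 / 2 /\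
  tcomp x = (tcomp q1 + tcomp q2) / 2.
Proof.
move=> s1 s2 h1 h2 nt.
have sd : scomp (q2 - q1) = 0 by rewrite scompD scompN s1 s2 subrr.
have td : tcomp (q2 - q1) = tcomp q2 - tcomp q1 by rewrite tcompD tcompN.
have e : x - q2 = (x - q1) - (q2 - q1) by vec.
have td0 : tcomp (q2 - q1) != 0 by rewrite td subr_eq0 eq_sym.
move: h2; rewrite /Lt e => h2.
have [hb ha] := S_gen sd td0 h1 h2.
rewrite -td; split => //.
move: ha; rewrite tcompD tcompN td => ha; move: ha; lra.
Qed.

Lemma frame3 (R : realFieldType) n (E V Wp : point R n) a b c a' b' c' :
  Bf E E = 1 -> Bf E V = 0 -> Bf E Wp = 0 -> Bf V Wp = 0 ->
  Bf (a *: E + b *: V + c *: Wp) (a' *: E + b' *: V + c' *: Wp) =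
  a * a' + b * b' * Bf V V + c * c' * Bf Wp Wp.
Proof.
move=> h1 h2 h3 h4.
rewrite !BfE (BfC V E) (BfC Wp E) (BfC Wp V) h1 h2 h3 h4; ring.
Qed.

Definition Xp (R : realFieldType) n (p1 E V Wp : point R n) tau D2 s h : point R n :=
  p1 + (tau / 2 + s) *: E + (1 / 2 + tau * s / D2) *: V + h *: Wp.

Lemma Cpoint (R : realFieldType) n (p1 E V Wp : point R n) tau D2 Sw s h :
  Bf E E = 1 -> Bf E V = 0 -> Bf E Wp = 0 -> Bf V Wp = 0 ->
  Bf V V = - D2 -> Bf Wp Wp = - Sw -> D2 != 0 ->
  h * h * Sw = s ^+ 2 * (1 - tau ^+ 2 / D2) + (tau ^+ 2 - D2) / 4 ->
  Lt (Xp p1 E V Wp tau D2 s h) p1 /\ Lt (Xp p1 E V Wp tau D2 s h) (p1 + (tau *: E + V)).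
Proof.
move=> h1 h2 h3 h4 hV hW hD hh; rewrite /Lt /Xp; split.
  have -> : p1 + (tau / 2 + s) *: E + (1 / 2 + tau * s / D2) *: V + h *: Wp - p1 =
    (tau / 2 + s) *: E + (1 / 2 + tau * s / D2) *: V + h *: Wp by vec.
  rewrite frame3 // hV hW.
  have -> : h * h * - Sw = - (h * h * Sw) by ring.
  rewrite hh; field => //.
have -> : p1 + (tau / 2 + s) *: E + (1 / 2 + tau * s / D2) *: V + h *: Wp - (p1 + (tau *: E + V)) =
    (s - tau / 2) *: E + (tau * s / D2 - 1 / 2) *: V + h *: Wp by apply/rowP => j; rewrite !mxE; field.
rewrite frame3 // hV hW.
have -> : h * h * - Sw = - (h * h * Sw) by ring.
rewrite hh; field => //.
Qed.

Lemma kA (R : realFieldType) n (a d : point R n) :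
  scomp d = 0 -> Bf a a = 0 -> Bf a d = tcomp d ^+ 2 / 2 -> tcomp a = tcomp d / 2 ->
  dot (scomp (2 *: a - d)) (scomp (2 *: a - d)) = tcomp d ^+ 2.
Proof.
move=> sd h1 h2 h3; rewrite dot_scomp tcompD tcompN tcompZ h3.
have dd : Bf d d = tcomp d ^+ 2 by rewrite Bf_s0 // expr2.
rewrite !BfE h1 dd (BfC d a) h2; by field.
Qed.

Lemma kB (R : realFieldType) n (a b d : point R n) :
  scomp d = 0 -> tcomp a = tcomp d / 2 -> tcomp b = tcomp d / 2 ->
  Bf a a = 0 -> Bf b b = 0 -> Bf a d = tcomp d ^+ 2 / 2 -> Bf b d = tcomp d ^+ 2 / 2 ->
  dot (scomp (a - b)) (scomp (a - b)) <= tcomp d ^+ 2.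
Proof.
move=> sd ta tb ha hb had hbd.
have dd : Bf d d = tcomp d ^+ 2 by rewrite Bf_s0 // expr2.
have tr : tcomp (a + b - d) = 0 by rewrite !tcompD tcompN ta tb; by field.
have := dot_ge0 (scomp (a + b - d)); rewrite dot_scomp tr.
rewrite dot_scomp tcompD tcompN ta tb.
rewrite !BfE ha hb dd (BfC d a) (BfC d b) (BfC b a) had hbd => h.
have e : tcomp d / 2 - tcomp d / 2 = 0 by ring.
rewrite e; move: h; lra.
Qed.

Lemma mW (R : realFieldType) n (Wp : point R n) Sw c :
  tcomp Wp = 0 -> Bf Wp Wp = - Sw ->
  dot (scomp (c *: Wp)) (scomp (c *: Wp)) = c * c * Sw.
Proof. by move=> t h; rewrite dot_scomp tcompZ t BfZl BfZr h; ring. Qed.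



Unset Implicit Arguments. Set Strict Implicit.

Theorem mainTheorem2 (n : nat) (hn : (2 <= n)%N) (R : realFieldType) (B : Type)
  (Ob IOb Ph : B -> Prop) (W : B -> B -> point R n -> Prop) :
  SpecRel Ob IOb Ph W ->
  forall (m k : B) (e1 e2 : B -> Prop),
    IOb m -> IOb k -> inEv W k e1 -> inEv W k e2 -> e1 k -> e2 k ->
    (exists p1 p2, IsCrd W m e1 p1 /\ IsCrd W m e2 p2 /\ sdist p1 p2 != 0) ->
    exists p1 p2 q1 q2,
      [/\ IsCrd W m e1 p1, IsCrd W m e2 p2, IsCrd W k e1 q1, IsCrd W k e2 q2
        & tdiff q1 q2 < tdiff p1 p2].
Proof.
move=> hS m k e1 e2 hm hk he1 he2 ke1 ke2 [p1 [p2 [c1 [c2 hd]]]].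
case: hS => [hFr [hE [hSelf [hPh [hEv hSim]]]]].
have hn1 : (1 <= n)%N by apply: leq_trans hn.
case: he1 => q1 [Cq1 eq1]; case: he2 => q2 [Cq2 eq2].
have Cr1 : IsCrd W k e1 q1 by apply: (mkCrd hn1 hE hPh hk).
have Cr2 : IsCrd W k e2 q2 by apply: (mkCrd hn1 hE hPh hk).
exists p1, p2, q1, q2; split => //.
pose F := fun z p => ev W m p = ev W k z.
have Ftot : forall z, exists p, F z p.
  move=> z; have : inEv W k (ev W k z) by exists z; split => //; apply: Cd_all hE hPh k hk z.
  by move/(hEv k m hk hm) => [p [_ hp]]; exists p.
have Fsur : forall p, exists z, F z p.
  move=> p; have : inEv W m (ev W m p) by exists p; split => //; apply: Cd_all hE hPh m hm p.
  by move/(hEv m k hm hk) => [z [_ hz]]; exists z; rewrite /F hz.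
have Finj : forall z z' p, F z p -> F z' p -> z = z'.
  move=> z z' p h h'; apply: (ev_inj hn1 hE hPh hk); by rewrite -h -h'.
have Ffun : forall z p p', F z p -> F z p' -> p = p'.
  move=> z p p' h h'; apply: (ev_inj hn1 hE hPh hm); by rewrite h h'.
have Flt : forall z z' p p', F z p -> F z' p' -> (Lt z z' <-> Lt p p').
  move=> z z' p p' h h'; rewrite (ph_Lt hE hPh hk) (ph_Lt hE hPh hm).
  split => -[b [hb [w1 w2]]]; exists b; split => //; split.
  - by have : ev W k z b by []; rewrite -h.
  - by have : ev W k z' b by []; rewrite -h'.
  - by have : ev W m p b by []; rewrite h.
  - by have : ev W m p' b by []; rewrite h'.
have F1 : F q1 p1 by rewrite /F eq1; case: c1 => _ [].
have F2 : F q2 p2 by rewrite /F eq2; case: c2 => _ [].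
have s1 : scomp q1 = 0.
  apply: (hSelf k (hFr.1 k hk) q1 Cq1).1; by have : ev W k q1 k by rewrite eq1.
have s2 : scomp q2 = 0.
  apply: (hSelf k (hFr.1 k hk) q2 Cq2).1; by have : ev W k q2 k by rewrite eq2.
have [sp hsp] := sdist_sq hE p1 p2.
have nq12 : tcomp q1 != tcomp q2.
  apply/negP => /eqP tq.
  have eq12 : q1 = q2.
    apply/eqP; rewrite -subr_eq0; apply/eqP; apply: pt_eq0.
      by rewrite tcompD tcompN tq subrr.
    by rewrite scompD scompN s1 s2 subrr.
  have ep : p1 = p2.
    apply: (Ffun q1) => //; by rewrite eq12.
  move: hd hsp; rewrite ep subrr scomp0 dot0r => /negP hd hsp; apply: hd.
  apply/eqP; move: sp hsp; nra.
have sd : scomp (q2 - q1) = 0 by rewrite scompD scompN s1 s2 subrr.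
have td : tcomp (q2 - q1) = tcomp q2 - tcomp q1 by rewrite tcompD tcompN.
have nLq : ~ Lt q1 q2.
  rewrite /Lt => h; move/negP: nq12; apply.
  have e : q1 - q2 = - (q2 - q1) by vec.
  move: h; rewrite e BfNl BfNr opprK Bf_s0 // td => h.
  apply/eqP; move: h; nra.
have nLp : ~ Lt p1 p2 by move=> h; apply: nLq; apply/(Flt _ _ _ _ F1 F2).
have BP : Bf (p2 - p1) (p2 - p1) != 0.
  apply/eqP => h; apply: nLp; rewrite /Lt.
  have e : p1 - p2 = - (p2 - p1) by vec.
  by rewrite e BfNl BfNr opprK h.
set tau := tcomp (p2 - p1).
set D2 := dot (scomp (p2 - p1)) (scomp (p2 - p1)).
have hD2 : 0 < D2.
  rewrite lt0r dot_ge0 andbT; apply/negP => /eqP h.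
  move/negP: hd; apply; apply/eqP.
  have e : scomp (p1 - p2) = - scomp (p2 - p1) by rewrite -scompN; congr scomp; vec.
  move: hsp; rewrite e dotNl dotC dotNl opprK -/D2 h; move: sp; nra.
have tauE : tcomp p1 - tcomp p2 = - tau by rewrite /tau tcompD tcompN; ring.
rewrite /tdiff; apply: sq_abs_lt; rewrite tauE sqrrN.
set T := tcomp q2 - tcomp q1.
have -> : (tcomp q1 - tcomp q2) ^+ 2 = T ^+ 2 by rewrite /T -sqrrN opprB.
have [w [hwv hww]] := ortho_ex hn (scomp (p2 - p1)).
set Sw := dot w w in hww.
have [E0 [tE sE]] : exists E0 : point R n, tcomp E0 = 1 /\ scomp E0 = 0.
  by exists (mkpt 1 0); rewrite tcomp_mk scomp_mk.
have [Vv [tV sV]] : exists V : point R n, tcomp V = 0 /\ scomp V = scomp (p2 - p1).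
  by exists (mkpt 0 (scomp (p2 - p1))); rewrite tcomp_mk scomp_mk.
have [Wp [tW sW]] : exists V : point R n, tcomp V = 0 /\ scomp V = w.
  by exists (mkpt 0 w); rewrite tcomp_mk scomp_mk.
have BEE : Bf E0 E0 = 1 by rewrite /Bf tE sE dot0r; ring.
have BEV : Bf E0 Vv = 0 by rewrite /Bf tE sE tV dotC dot0r; ring.
have BEW : Bf E0 Wp = 0 by rewrite /Bf tE sE tW dotC dot0r; ring.
have BVW : Bf Vv Wp = 0.
  by rewrite /Bf tV sV tW sW dotC hwv; ring.
have BVV : Bf Vv Vv = - D2 by rewrite /Bf tV sV -/D2; ring.
have BWW : Bf Wp Wp = - Sw by rewrite /Bf tW sW -/Sw; ring.
have eP : p2 = p1 + (tau *: E0 + Vv).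
  apply/eqP; rewrite -subr_eq0; apply/eqP; apply: pt_eq0.
    by rewrite !(tcompD, tcompN, tcompZ) tE tV /tau !(tcompD, tcompN); ring.
  rewrite !(scompD, scompN, scompZ) sE sV !(scompD, scompN) scaler0 add0r; vec.
have D20 : D2 != 0 by rewrite gt_eqF.
have Sw0 : Sw != 0 by rewrite gt_eqF.
have tXp : forall s h, tcomp (Xp p1 E0 Vv Wp tau D2 s h) = tcomp p1 + (tau / 2 + s).
  by move=> s h; rewrite /Xp !(tcompD, tcompZ) tE tV tW; ring.
have dXp : forall s h h', Xp p1 E0 Vv Wp tau D2 s h - Xp p1 E0 Vv Wp tau D2 s h' = (h - h') *: Wp.
  by move=> s h h'; rewrite /Xp; vec.
have tp2 : tcomp p2 = tcomp p1 + tau by rewrite /tau tcompD tcompN; ring.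
have simdot : forall X Y x y, F x X -> F y Y -> tcomp X = tcomp Y -> tcomp x = tcomp y ->
    dot (scomp (X - Y)) (scomp (X - Y)) = dot (scomp (x - y)) (scomp (x - y)).
  move=> X Y x y FX FY tXY txy.
  have iX : inEv W m (ev W m X) by exists X; split => //; apply: Cd_all hE hPh m hm X.
  have iY : inEv W m (ev W m Y) by exists Y; split => //; apply: Cd_all hE hPh m hm Y.
  have := hSim m k hm hk _ _ iX iY X Y x y
    (mkCrd hn1 hE hPh hm (erefl _)) (mkCrd hn1 hE hPh hm (erefl _))
    (mkCrd hn1 hE hPh hk (esym FX)) (mkCrd hn1 hE hPh hk (esym FY)) tXY txy.
  have [a1 a2] := sdist_sq hE X Y; have [b1 b2] := sdist_sq hE x y.
  by move=> e; rewrite -a2 -b2 e.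
have tdT : tcomp (q2 - q1) = T by rewrite td.
have [hA|hB] := lerP D2 (tau ^+ 2).
- have H0 : 0 <= (tau ^+ 2 - D2) / 4 / Sw.
    apply: divr_ge0; last exact: ltW.
    by apply: divr_ge0; [rewrite subr_ge0 | ].
  have [h0 [_ hh0]] := sqrt_ex hE H0.
  have hh : h0 * h0 * Sw = 0 ^+ 2 * (1 - tau ^+ 2 / D2) + (tau ^+ 2 - D2) / 4.
    by rewrite hh0; field; rewrite D20 Sw0.
  have [LX1 LX2] := Cpoint p1 BEE BEV BEW BVW BVV BWW D20 hh.
  rewrite -eP in LX2.
  have [Xm eXm] : exists Xm, Xm = Xp p1 E0 Vv Wp tau D2 0 h0 by eexists.
  rewrite -eXm in LX1 LX2.
  have tXm : tcomp Xm = tcomp p1 + tau / 2 by rewrite eXm tXp addr0.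
  have tau0 : tau != 0.
    apply/negP => /eqP t0; move: hA; rewrite t0 expr2 mul0r => hA.
    by move: hD2; rewrite ltNge hA.
  have [x Fx] := Fsur Xm.
  have hxq1 := (Flt _ _ _ _ Fx F1).2 LX1.
  have hxq2 := (Flt _ _ _ _ Fx F2).2 LX2.
  have nxq1 : x != q1.
    apply/negP => /eqP ex; rewrite ex in Fx.
    have e := Ffun _ _ _ Fx F1; move: tXm; rewrite e => h.
    by move/negP: tau0; apply; apply/eqP; move: h; lra.
  have [y ey] : exists y, y = q2 - (x - q1) by eexists.
  have [Y FY] := Ftot y.
  have FY' : F (q2 - (x - q1)) Y by rewrite -ey.
  have [a ea] := PL Ftot Fsur Finj Flt F1 F2 Fx FY' hxq1 nxq1 hxq2 nLq.
  have FX' : F (q2 - (y - q1)) Xm by have -> : q2 - (y - q1) = x by rewrite ey; vec.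
  have hyq1 : Lt y q1.
    move: hxq2; rewrite /Lt; have -> : y - q1 = - (x - q2) by rewrite ey; vec.
    by rewrite BfNl BfNr opprK.
  have hyq2 : Lt y q2.
    move: hxq1; rewrite /Lt; have -> : y - q2 = - (x - q1) by rewrite ey; vec.
    by rewrite BfNl BfNr opprK.
  have nyq1 : y != q1.
    apply/negP => /eqP eyq.
    have ex : x = q2.
      apply/rowP => j; have := congr1 (fun r : point R n => r ord0 j) eyq.
      by rewrite ey !mxE => ?; lra.
    rewrite ex in Fx; have e := Ffun _ _ _ Fx F2.
    move: tXm; rewrite e tp2 => h; move/negP: tau0; apply; apply/eqP; move: h; lra.
  have [b eb] := PL Ftot Fsur Finj Flt F1 F2 FY FX' hyq1 nyq1 hyq2 nLq.
  have nX : Xm != p1.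
    apply/negP => /eqP e; move: tXm; rewrite e => h.
    by move/negP: tau0; apply; apply/eqP; move: h; lra.
  have hpara := para nX LX1 BP ea eb.
  have eY : Y = p1 + p2 - Xm.
    apply/rowP => j; have := congr1 (fun r : point R n => r ord0 j) hpara.
    by rewrite !mxE => ?; lra.
  have [hb1 tx] := S_facts s1 s2 hxq1 hxq2 nq12.
  have ty : tcomp y = tcomp x by rewrite ey !(tcompD, tcompN) tx; field.
  have tY : tcomp Y = tcomp Xm.
    by rewrite eY !(tcompD, tcompN) tXm tp2; field.
  have := simdot _ _ _ _ Fx FY (esym tY) (esym ty).
  have -> : Xm - Y = (h0 - - h0) *: Wp by rewrite eY eP eXm /Xp; vecf.
  rewrite (mW _ tW BWW).
  have -> : x - y = 2 *: (x - q1) - (q2 - q1) by rewrite ey; vec.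
  have ta : tcomp (x - q1) = tcomp (q2 - q1) / 2.
    by rewrite tcompD tcompN tx tdT /T; field.
  rewrite -td in hb1; rewrite (kA sd hxq1 hb1 ta) tdT => e.
  have : (h0 - - h0) * (h0 - - h0) * Sw = 4 * (h0 * h0 * Sw) by ring.
  rewrite hh e => e'.
  have : T ^+ 2 = tau ^+ 2 - D2 by rewrite e'; field.
  move=> ->; move: hD2; lra.
- exfalso.
  have Dt : 0 < D2 - tau ^+ 2 by rewrite subr_gt0.
  have sq0 : 0 <= D2 * (T ^+ 2 + D2) / (D2 - tau ^+ 2).
    apply: divr_ge0; last exact: ltW.
    apply: mulr_ge0; first exact: ltW.
    by apply: addr_ge0; [apply: sqr_ge0 | apply: ltW].
  have [s [_ hs]] := sqrt_ex hE sq0.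
  have [H eH] : exists H, H = s ^+ 2 * (1 - tau ^+ 2 / D2) + (tau ^+ 2 - D2) / 4 by eexists.
  have HE : H = T ^+ 2 + D2 - (D2 - tau ^+ 2) / 4.
    rewrite eH expr2 hs; field; rewrite D20 /=; apply: lt0r_neq0 => //.
  have H0 : 0 <= H / Sw.
    apply: divr_ge0; last exact: ltW.
    rewrite HE; have := sqr_ge0 T; have := sqr_ge0 tau; move: Dt hD2; lra.
  have [h [_ hh0]] := sqrt_ex hE H0.
  have hh1 : h * h * Sw = s ^+ 2 * (1 - tau ^+ 2 / D2) + (tau ^+ 2 - D2) / 4.
    by rewrite -eH hh0; field; rewrite Sw0.
  have hh2 : (- h) * (- h) * Sw = s ^+ 2 * (1 - tau ^+ 2 / D2) + (tau ^+ 2 - D2) / 4.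
    by rewrite mulrNN.
  have [L11 L12] := Cpoint p1 BEE BEV BEW BVW BVV BWW D20 hh1.
  have [L21 L22] := Cpoint p1 BEE BEV BEW BVW BVV BWW D20 hh2.
  rewrite -eP in L12 L22.
  have [X1 eX1] : exists X, X = Xp p1 E0 Vv Wp tau D2 s h by eexists.
  have [X2 eX2] : exists X, X = Xp p1 E0 Vv Wp tau D2 s (- h) by eexists.
  rewrite -eX1 in L11 L12; rewrite -eX2 in L21 L22.
  have [x1 Fx1] := Fsur X1.
  have [x2 Fx2] := Fsur X2.
  have h11 := (Flt _ _ _ _ Fx1 F1).2 L11.
  have h12 := (Flt _ _ _ _ Fx1 F2).2 L12.
  have h21 := (Flt _ _ _ _ Fx2 F1).2 L21.
  have h22 := (Flt _ _ _ _ Fx2 F2).2 L22.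
  have [b1 t1] := S_facts s1 s2 h11 h12 nq12.
  have [b2 t2] := S_facts s1 s2 h21 h22 nq12.
  have tX : tcomp X1 = tcomp X2 by rewrite eX1 eX2 !tXp.
  have := simdot _ _ _ _ Fx1 Fx2 tX (etrans t1 (esym t2)).
  rewrite eX1 eX2 dXp (mW _ tW BWW).
  have -> : x1 - x2 = (x1 - q1) - (x2 - q1) by vec.
  have ta : tcomp (x1 - q1) = tcomp (q2 - q1) / 2.
    by rewrite tcompD tcompN t1 tdT /T; field.
  have tb : tcomp (x2 - q1) = tcomp (q2 - q1) / 2.
    by rewrite tcompD tcompN t2 tdT /T; field.
  rewrite -td in b1 b2.
  have := kB sd ta tb h11 h21 b1 b2; rewrite tdT => hkB e.
  have : (h - - h) * (h - - h) * Sw = 4 * (h * h * Sw) by ring.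
  rewrite e hh1 -eH HE => e'.
  have := sqr_ge0 T; have := sqr_ge0 tau; move: hkB e' Dt hD2; lra.
Qed.
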